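(* Let $A$ be an associative unital $k$-algebra over a commutative ring $k$. Then $A$ is a left Ore domain if and only if $A$ is a monoform left $A$-module. In this case $A$ is a monoform left $B$-module for every subalgebra $B$ with $L(A)\subseteq B\subseteq\mathrm{End}_k(A)$.
   Context: $L(A)=\{L_a: a\in A\}$ where $L_a(x)=ax$; $A$ is a left $B$-module via $\varphi\cdot a=\varphi(a)$. A left Ore domain is a domain $R$ such that $Ra\cap Rb\neq 0$ for all nonzero $a,b\in R$ (equivalently, a domain of left uniform dimension $1$). A module $M$ is monoform if every nonzero homomorphism $f:N\to M$ from a submodule $N\subseteq M$ is injective. *)

(* Defs.v *)
From HB Require Import structures.
From mathcomp Require Import all_boot all_order all_algebra.
Set Implicit Arguments. Unset Strict Implicit. Unset Printing Implicit Defensive.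
Import GRing.Theory.
Local Open Scope ring_scope.

Definition is_domain (R : pzRingType) : Prop :=
  (1 : R) != 0 /\ forall a b : R, a * b = 0 -> a = 0 \/ b = 0.

Definition left_ore_domain (R : pzRingType) : Prop :=
  is_domain R /\
  forall a b : R, a != 0 -> b != 0 ->
    exists x y : R, x * a = y * b /\ x * a != 0.

(* Generic left modules: an abelian group M with an action [act] of the
   elements r of some type Rg satisfying the predicate S (the "ring"). *)

Definition is_submod (Rg : Type) (S : Rg -> Prop) (M : zmodType)
    (act : Rg -> M -> M) (N : M -> Prop) : Prop :=
  [/\ N 0,
      (forall x y, N x -> N y -> N (x - y)) &
      (forall r x, S r -> N x -> N (act r x))].

(* f (only its values on N matter) is a module homomorphism N -> M. *)
Definition is_modhom (Rg : Type) (S : Rg -> Prop) (M : zmodType)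
    (act : Rg -> M -> M) (N : M -> Prop) (f : M -> M) : Prop :=
  (forall x y, N x -> N y -> f (x + y) = f x + f y) /\
  (forall r x, S r -> N x -> f (act r x) = act r (f x)).

Definition monoform (Rg : Type) (S : Rg -> Prop) (M : zmodType)
    (act : Rg -> M -> M) : Prop :=
  forall (N : M -> Prop) (f : M -> M),
    is_submod S act N -> is_modhom S act N f ->
    (exists x, N x /\ f x != 0) ->
    forall x y, N x -> N y -> f x = f y -> x = y.

Definition monoform_left_self (A : pzRingType) : Prop :=
  monoform (fun _ : A => True) (fun a x : A => a * x).

Definition monoform_over (k : pzRingType) (A : lmodType k)
    (B : (A -> A) -> Prop) : Prop :=
  monoform B (fun (phi : A -> A) (x : A) => phi x).

Definition k_linear (k : pzRingType) (A : lmodType k) (phi : A -> A) : Prop :=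
  forall (c : k) (x y : A), phi (c *: x + y) = c *: phi x + phi y.

(* B is a k-subalgebra of End_k(A) (operations pointwise, product = composition)
   containing L(A) = {x |-> a * x : a \in A}. *)
Definition subalg_End_containing_L (k : pzRingType) (A : algType k)
    (B : (A -> A) -> Prop) : Prop :=
  (forall phi, B phi -> k_linear phi) /\
  [/\ B (fun x => x),
      (forall phi psi, B phi -> B psi -> B (fun x => phi x + psi x)),
      (forall (c : k) phi, B phi -> B (fun x => c *: phi x)),
      (forall phi psi, B phi -> B psi -> B (fun x => phi (psi x))) &
      (forall a : A, B (fun x => a * x))].

(* Main.v *)
Require Import Defs.
From HB Require Import structures.
From mathcomp Require Import all_boot all_order all_algebra.
From Stdlib Require Import ClassicalEpsilon.
Import GRing.Theory.
Local Open Scope ring_scope.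

Lemma ore_inj (A : pzRingType) (Hore : left_ore_domain A) (N : A -> Prop) (f : A -> A) :
  N 0 -> (forall x y, N x -> N y -> N (x - y)) -> (forall r x, N x -> N (r * x)) ->
  (forall x y, N x -> N y -> f (x + y) = f x + f y) ->
  (forall r x, N x -> f (r * x) = r * f x) ->
  (exists x, N x /\ f x != 0) -> forall x y, N x -> N y -> f x = f y -> x = y.
Proof.
move=> N0 NB NM fD fM [w [Nw fw]] x y Nx Ny fxy.
have f0 : f 0 = 0.
  have := fD 0 0 N0 N0; rewrite addr0 => /(congr1 (fun t => t - f 0)).
  by rewrite subrr addrK.
have Nz := NB _ _ Nx Ny.
have fz : f (x - y) = 0.
  have := fD _ _ Nz Ny; rewrite subrK fxy => /(congr1 (fun t => t - f y)).
  by rewrite subrr addrK.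
apply/eqP; rewrite -subr_eq0; apply/negPn/negP => z0.
have w0 : w != 0 by apply: contraNneq fw => ->; rewrite f0.
case: Hore => [[_ dom] ore].
have [u [v [e ne]]] := ore _ _ z0 w0.
have : v * f w = 0 by rewrite -fM // -e fM // fz mulr0.
case/dom => [v0|]; last by move/eqP; rewrite (negbTE fw).
by move: ne; rewrite e v0 mul0r eqxx.
Qed.

Section Conv.
Variable (A : pzRingType).

Lemma mono_dom (H : monoform_left_self A) (a b : A) : a * b = 0 -> a = 0 \/ b = 0.
Proof.
move=> ab.
case: (eqVneq b 0) => [->|b0]; [by right|left].
apply: (H (fun _ => True) (fun x => x * b) _ _ _ a 0) => //.
all: try by split.
all: try by split => *; rewrite ?mulrDl ?mulrA.
all: try by exists 1; rewrite mul1r.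
all: try by rewrite ab mul0r.
Qed.

Variables (a b : A) (Hd : forall x y : A, x * a = y * b -> x * a = 0).

Definition proj (z : A) : A :=
  match excluded_middle_informative (exists p : A * A, z = p.1 * a + p.2 * b) with
  | left H => (proj1_sig (constructive_indefinite_description _ H)).1 * a
  | right _ => 0
  end.

Lemma projP x y : proj (x * a + y * b) = x * a.
Proof.
rewrite /proj; case: excluded_middle_informative => [H|]; last first.
  by case; exists (x, y).
case: constructive_indefinite_description => [[x' y'] /=] e.
have e2 : (x - x') * a = (y' - y) * b.
  have e' : x * a = x' * a + y' * b - y * b by rewrite -e addrK.
  by rewrite !mulrBl e' addrC -[x' * a + _ + _]addrA addKr.
have := Hd _ _ e2 => /eqP; rewrite mulrBl subr_eq0 => /eqP ->.
done.
Qed.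

Lemma no_mono (H : monoform_left_self A) : a != 0 -> b != 0 -> False.
Proof.
move=> a0 b0.
pose N := fun z : A => exists p : A * A, z = p.1 * a + p.2 * b.
have := (@projP 0 1); rewrite mul0r mul1r add0r => pb.
have pz : proj 0 = 0 by have := @projP 0 0; rewrite !mul0r addr0.
suff : b = 0 by move/eqP: b0.
apply: (H N proj _ _ _ b 0).
- split; first by exists (0, 0); rewrite !mul0r addr0.
  + move=> _ _ [[x1 y1] ->] [[x2 y2] ->]; exists (x1 - x2, y1 - y2).
    by rewrite /= !mulrBl opprD !addrA; congr (_ + _); rewrite addrAC.
  + move=> r _ _ [[x y] ->]; exists (r * x, r * y).
    by rewrite /= mulrDr !mulrA.
- split.
  + move=> _ _ [[x1 y1] ->] [[x2 y2] ->].
    have -> : x1 * a + y1 * b + (x2 * a + y2 * b) = (x1 + x2) * a + (y1 + y2) * b.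
      by rewrite !mulrDl addrACA.
    by rewrite !projP mulrDl.
  + move=> r _ _ [[x y] ->].
    have -> : r * (x * a + y * b) = (r * x) * a + (r * y) * b by rewrite mulrDr !mulrA.
    by rewrite !projP mulrA.
- exists a; split; first by exists (1, 0); rewrite /= mul1r mul0r addr0.
  by have := @projP 1 0; rewrite mul1r mul0r addr0 => ->.
- by exists (0, 1); rewrite /= mul0r mul1r add0r.
- by exists (0, 0); rewrite /= !mul0r addr0.
- by rewrite pb pz.
Qed.
End Conv.

Theorem lemma2p3 (k : comPzRingType) (A : algType k) :
  (left_ore_domain A <-> monoform_left_self A) /\
  (left_ore_domain A ->
     forall B : (A -> A) -> Prop, subalg_End_containing_L B ->
       monoform_over B).
Proof.
split; [split|].
- move=> Ho N f [N0 NB NM] [fD fM].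
  apply: ore_inj => // r x Nx; [exact: NM | exact: fM].
- move=> H; split; first by split; [exact: oner_neq0 | exact: mono_dom].
  move=> a b a0 b0.
  case: (boolP [exists x : unit, false]) => [/existsP[]//|_].
  apply: NNPP => nex; apply: (@no_mono A a b _ H a0 b0).
  move=> x y e; apply/eqP; apply/negPn/negP => ne; apply: nex.
  by exists x, y.
- move=> Ho B [_ [_ _ _ _ BL]] N f [N0 NB NM] [fD fM].
  apply: ore_inj => // r x Nx; [exact: (NM _ _ (BL r)) | exact: (fM _ _ (BL r))].
Qed.
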